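(* Let $B=F(b_1,\ldots,b_n)$ be a Ferrers board with $0\le b_1\le\cdots\le b_n$. Then, as polynomials in $x$, $$x^n=\sum_{k=0}^n\mathbf{rPT}_{n-k}(B,p,q,r)\,(x-P_{b_1}(p,q,r))(x-P_{b_2}(p,q,r))\cdots(x-P_{b_k}(p,q,r)),$$ where the empty product ($k=0$) equals 1.
   Context: For $m\ge1$, a $P$-tiling of height $m$ is a tiling of a column of height $m$ by tiles of heights 1, 2 and 3 whose bottom-most tile has height 1. $P_m(p,q,r)=\sum_T q^{\mathrm{one}(T)}p^{\mathrm{two}(T)}r^{\mathrm{three}(T)}$ over all $P$-tilings $T$ of height $m$, where $\mathrm{one},\mathrm{two},\mathrm{three}$ count tiles of height 1, 2, 3. There are no $P$-tilings of height 0 and $P_0(p,q,r)=0$. A Ferrers board $F(b_1,\ldots,b_n)$ has column heights $b_1,\ldots,b_n$ from left to right. A $P$-rook placement of $k$ tilings in $B=F(b_1,\ldots,b_n)$ is a choice of columns $1\le i_1<\cdots<i_k\le n$ with, for each $s=1,\ldots,k$, a $P$-tiling of height $b_{i_s-(s-1)}$ in column $i_s$ (the number of cells of column $i_s$ left uncanceled by earlier tilings, each tiling canceling top cells of columns to its right so that after $s$ tilings the untiled columns have $b_1,\ldots,b_{n-s}$ uncanceled cells). Its weight is $q^ap^br^c$ with $a,b,c$ the total numbers of tiles of height 1, 2, 3 used. $\mathbf{rPT}_k(B,p,q,r)$ is the sum of the weights of all $P$-rook placements of $k$ tilings in $B$ (the empty placement has weight 1). *)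

(* Defs.v *)
From mathcomp Require Import all_boot all_order all_algebra.
Set Implicit Arguments. Unset Strict Implicit. Unset Printing Implicit Defensive.
Import GRing.Theory.
Local Open Scope ring_scope.

(* A tile is encoded by i : 'I_3, of height (val i).+1 (1, 2 or 3).
   A tiling of a column is the sequence of its tiles listed from bottom to top. *)
Definition tile_height (i : 'I_3) : nat := (val i).+1.

Definition tile_weight (R : comNzRingType) (p q r : R) (i : 'I_3) : R :=
  match val i with 0 => q | 1 => p | _ => r end.

Definition is_Ptiling (m : nat) (t : seq 'I_3) : bool :=
  (sumn [seq tile_height i | i <- t] == m) &&
  (if t is i :: _ then tile_height i == 1%N else false).

(* P_m(p,q,r) = sum over all P-tilings of height m (which have at most m tiles)
   of q^one p^two r^three *)
Definition Ptil (R : comNzRingType) (p q r : R) (m : nat) : R :=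
  \sum_(k < m.+1) \sum_(t : k.-tuple 'I_3 | is_Ptiling m t)
     \prod_(i <- t) tile_weight p q r i.

(* A placement chooses columns
   i_1 < .. < i_k (the set S, enumerated increasingly by enum S; 0-based
   column indices), and for the s-th chosen column (0-based j) a P-tiling of
   height b_{i_s-(s-1)} (0-based: nth 0 b (i - j)).  The weight is multiplicative,
   so summing over the independent choices of tilings gives the product of the
   corresponding P's. *)
Definition rPT (R : comNzRingType) (p q r : R) (b : seq nat) (k : nat) : R :=
  \sum_(S : {set 'I_(size b)} | #|S| == k)
     let s := [seq val i | i <- enum S] in
     \prod_(j < size s) Ptil p q r (nth 0%N b (nth 0%N s j - j)).

(* Main.v *)
Require Import Defs.
From mathcomp Require Import all_boot all_order all_algebra ring.
Import GRing.Theory.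
Local Open Scope ring_scope.

Set Implicit Arguments. Unset Strict Implicit.
Section G.
Variable R : comNzRingType.
Implicit Types a : nat -> R.

Definition sv n (S : {set 'I_n}) : seq nat := [seq val i | i <- enum S].
Definition W a (s : seq nat) : R := \prod_(j < size s) a (nth 0%N s j - j)%N.
Definition G a (n k : nat) := \sum_(S : {set 'I_n} | #|S| == k) W a (sv S).

Lemma sv_sorted n (S : {set 'I_n}) : sorted ltn (sv S).
Proof.
apply: (@subseq_sorted _ _ ltn_trans _ (iota 0 n)); last exact: iota_ltn_sorted.
rewrite -val_enum_ord /sv; apply: map_subseq.
rewrite enumT /enum_mem; exact: filter_subseq.
Qed.



Lemma mem_svP n (S : {set 'I_n}) m :
  reflect (exists2 i : 'I_n, i \in S & m = val i) (m \in sv S).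
Proof.
apply: (iffP mapP) => [[i]|[i]]; rewrite ?mem_enum => Hi ->; by exists i; rewrite ?mem_enum.
Qed.

Definition hh n (S : {set 'I_n}) : {set 'I_n.+1} := [set widen_ord (leqnSn n) i | i in S].
Definition hh' n (S : {set 'I_n.+1}) : {set 'I_n} := [set i : 'I_n | widen_ord (leqnSn n) i \in S].

Lemma widen_inj n : injective (widen_ord (leqnSn n)).
Proof. by move=> x y /(congr1 val) /= /val_inj. Qed.

Lemma sv_hh n (S : {set 'I_n}) : sv (hh S) = sv S.
Proof.
apply: (irr_sorted_eq ltn_trans ltnn); rewrite ?sv_sorted // => m.
apply/mem_svP/mem_svP => [[i /imsetP [j Hj ->] ->]|[i Hi ->]].
  by exists j.
by exists (widen_ord (leqnSn n) i) => //; apply: imset_f.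
Qed.

Lemma sv_hhmax n (S : {set 'I_n}) : sv (ord_max |: hh S) = rcons (sv S) n.
Proof.
apply: (irr_sorted_eq ltn_trans ltnn); rewrite ?sv_sorted //.
  rewrite (sorted_pairwise ltn_trans) -cats1 pairwise_cat -(sorted_pairwise ltn_trans) sv_sorted /= !andbT.
  by apply/allrelP => m k /mem_svP [i _ ->]; rewrite inE => /eqP ->; apply: ltn_ord.
move=> m; rewrite mem_rcons inE.
apply/mem_svP/orP => [[i]|].
  rewrite in_setU1 => /orP [/eqP -> ->|/imsetP [j Hj ->] ->]; first by left.
  by right; apply/mem_svP; exists j.
case=> [/eqP ->|/mem_svP [i Hi ->]].
  by exists ord_max; rewrite ?setU11.
exists (widen_ord (leqnSn n) i) => //.
by rewrite in_setU1 imset_f ?orbT.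
Qed.

Lemma hh_hh'D n (S : {set 'I_n.+1}) : hh (hh' S) = S :\ ord_max.
Proof.
apply/setP => x; rewrite in_setD1; apply/imsetP/andP => [[i]|[Hx1 Hx]].
  rewrite inE => Hi ->; split => //; apply/eqP => /(congr1 val) /= E.
  by move: (ltn_ord i); rewrite E ltnn.
have Hxn : (x < n)%N.
  rewrite ltn_neqAle -ltnS ltn_ord andbT; apply: contra Hx1 => /eqP Hx'.
  by apply/eqP; apply: val_inj.
have Ew : widen_ord (leqnSn n) (Ordinal Hxn) = x by apply: val_inj.
exists (Ordinal Hxn); first by rewrite inE Ew.
by apply: val_inj.
Qed.

Lemma hh_hh' n (S : {set 'I_n.+1}) : ord_max \notin S -> hh (hh' S) = S.
Proof. by move=> HS; rewrite hh_hh'D; apply/setP => x; rewrite in_setD1; case: eqP => // ->; rewrite (negbTE HS). Qed.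


Lemma hh'_hh n (S : {set 'I_n}) : hh' (hh S) = S.
Proof. by apply/setP => x; rewrite inE /hh (mem_imset _ _ (@widen_inj n)). Qed.

Lemma hh'U n (S : {set 'I_n.+1}) : hh' (ord_max |: S) = hh' S.
Proof.
apply/setP => x; rewrite !inE; case: eqP => //= /(congr1 val) /= Hx.
by move: (ltn_ord x); rewrite Hx ltnn.
Qed.

Lemma max_hh n (S : {set 'I_n}) : ord_max \notin hh S.
Proof.
apply/imsetP => [[i _ /(congr1 val) /= Hi]].
by move: (ltn_ord i); rewrite -Hi ltnn.
Qed.

Lemma W_rcons a s m : W a (rcons s m) = W a s * a (m - size s)%N.
Proof.
rewrite /W size_rcons big_ord_recr /= nth_rcons ltnn eqxx; congr (_ * _).
by apply: eq_bigr => i _; rewrite nth_rcons ltn_ord.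
Qed.

Lemma size_sv n (S : {set 'I_n}) : size (sv S) = #|S|.
Proof. by rewrite /sv size_map -cardE. Qed.

Lemma card_hh n (S : {set 'I_n}) : #|hh S| = #|S|.
Proof. by rewrite /hh (card_imset _ (@widen_inj n)). Qed.

Lemma recG a n j :
  G a n.+1 j = G a n j + (if j is j'.+1 then a (n - j')%N * G a n j' else 0).
Proof.
rewrite /G (bigID (fun S : {set 'I_n.+1} => ord_max \in S)) /= addrC.
congr (_ + _).
  rewrite (reindex_onto (@hh n) (@hh' n)); last by move=> S /andP [_ HS]; apply: hh_hh'.
  apply: eq_big => S; last by rewrite sv_hh.
  by rewrite hh'_hh eqxx max_hh /hh (card_imset _ (@widen_inj n)) !andbT.
case: j => [|j] /=.
  apply: big1 => S /andP [/eqP /cards0_eq -> ]; by rewrite inE.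
rewrite mulr_sumr.
rewrite (reindex_onto (fun S => ord_max |: @hh n S) (@hh' n)); last first.
  by move=> S /andP [_ HS]; rewrite hh_hh'D setD1K.
apply: eq_big => S.
  by rewrite hh'U hh'_hh eqxx setU11 cardsU1 max_hh /hh (card_imset _ (@widen_inj n)) !andbT.
move=> /andP [/andP [HS _] _].
rewrite cardsU1 max_hh card_hh /= eqSS in HS.
by rewrite sv_hhmax W_rcons size_sv mulrC (eqP HS).
Qed.

Lemma G0 a n : G a n 0 = 1.
Proof.
rewrite /G (eq_bigl (pred1 set0)); last by move=> S; rewrite cards_eq0.
by rewrite big_pred1_eq /sv enum_set0 /W big_ord0.
Qed.

Lemma Gbig a n j : (n < j)%N -> G a n j = 0.
Proof.
move=> Hj; apply: big1 => S /eqP HS; move: (max_card S); rewrite card_ord HS.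
by rewrite leqNgt Hj.
Qed.

Lemma mainG a n :
  'X^n = \sum_(k < n.+1) (G a n (n - k)%N)%:P * \prod_(i < k) ('X - (a i)%:P).
Proof.
elim: n => [|n IH].
  by rewrite big_ord1 G0 big_ord0 mulr1 expr0.
set P := fun k => \prod_(i < k) ('X - (a i)%:P).
have XP k : 'X * P k = P k.+1 + (a k)%:P * P k.
  by rewrite /P big_ord_recr /=; set u := \prod_(i < k) _; ring.
rewrite exprS IH mulr_sumr.
under eq_bigr => k _ do rewrite mulrCA XP mulrDr.
rewrite big_split /=.
under [in RHS]eq_bigr => k _ do rewrite recG rmorphD mulrDl.
rewrite big_split /=; congr (_ + _).
  rewrite [in RHS]big_ord_recl /= Gbig // polyC0 mul0r add0r /P.
  by apply: eq_bigr => k _; rewrite /bump /= subSS.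
rewrite [in RHS]big_ord_recr /= subnn polyC0 mul0r addr0 /P.
apply: eq_bigr => k _ /=.
have Hk : (k <= n)%N by rewrite -ltnS ltn_ord.
rewrite subSn //= subKn // rmorphM /=; ring.
Qed.

End G.

Theorem theorem8 (R : comNzRingType) (p q r : R) (b : seq nat) :
  sorted leq b ->
  'X^(size b) =
  \sum_(k < (size b).+1)
     (rPT p q r b (size b - k))%:P *
     \prod_(i < k) ('X - (Ptil p q r (nth 0%N b i))%:P).
Proof.
move=> _; exact: (mainG (fun i => Ptil p q r (nth 0%N b i)) (size b)).
Qed.
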